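(* Let $d\ge 2$, $2\le r\le d$ and $n_1\ge n_2\ge\cdots\ge n_d\ge 2$ be integers. If a Latin hypercuboid of dimension $d$, type $(n_1,\dots,n_d)$, class $r$ and order $\prod_{i=1}^r n_i$ exists, then \[\sum_{i=1}^d n_i-\prod_{i=1}^r n_i\le d-1.\]
   Context: For integers $n_1\ge\cdots\ge n_d\ge 2$ and $1\le r\le d$, an $r$-dimensional subarray of $[n_1]\times\cdots\times[n_d]$ (where $[m]=\{1,\dots,m\}$) is a set of cells obtained by fixing the values of $d-r$ of the coordinates and letting the other $r$ coordinates range freely. A Latin hypercuboid of dimension $d$, type $(n_1,\dots,n_d)$, class $r$ and order $n=\prod_{i=1}^r n_i$, written $\mathrm{LHC}(n_1,\dots,n_d,r)$, is a map from $[n_1]\times\cdots\times[n_d]$ to a set of $n$ symbols such that in every $r$-dimensional subarray each symbol occurs at most once. When $n_1=\cdots=n_d=n$ it is called a Latin hypercube $\mathrm{LHC}(d,n,r)$ (with $n^r$ symbols). *)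

(* Defs.v *)
From mathcomp Require Import all_boot all_order all_algebra.
Set Implicit Arguments. Unset Strict Implicit. Unset Printing Implicit Defensive.

Definition cell (d : nat) (ns : d.-tuple nat) :=
  {dffun forall i : 'I_d, 'I_(tnth ns i)}.

(* Two cells lie in a common r-dimensional subarray whose free coordinates
   are S iff they agree on all coordinates outside S. *)
Definition same_subarray d (ns : d.-tuple nat) (S : {set 'I_d}) (x y : cell ns) :=
  [forall i, (i \notin S) ==> (val (x i) == val (y i))].

(* L : cells -> symbols is a Latin hypercuboid of class r: in every
   r-dimensional subarray (choice of r free coordinates S and fixed values
   of the others) each symbol occurs at most once. *)
Definition is_LHC d (ns : d.-tuple nat) (r : nat) (Sym : finType)
  (L : cell ns -> Sym) : Prop :=
  forall S : {set 'I_d}, #|S| = r ->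
    forall x y : cell ns, same_subarray S x y -> L x = L y -> x = y.

Definition LHC_order d (ns : d.-tuple nat) (r : nat) : nat :=
  \prod_(i < d | i < r) tnth ns i.

Definition LHC_exists d (ns : d.-tuple nat) (r : nat) : Prop :=
  exists L : cell ns -> 'I_(LHC_order ns r), is_LHC r L.

(* Main.v *)
Require Import Defs.
From mathcomp Require Import all_boot all_order all_algebra.
From mathcomp Require Import zify.

Lemma exists_superset (T : finType) (k : nat) :
  forall A : {set T}, #|A| <= k <= #|T| -> exists S : {set T}, A \subset S /\ #|S| = k.
Proof.
elim: k => [|k IH] A /andP[hA hk].
  exists A; split => //; by apply/eqP; rewrite -leqn0.
case: (ltngtP #|A| k.+1) hA => // [hlt _|heq _]; last by exists A.
have [S [sAS cS]] := IH A (introT andP (conj hlt (ltnW hk))).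
have [x xS] : exists x, x \notin S.
  apply/existsP; rewrite -negb_forall; apply/negP => /forallP H.
  have : S = [set: T] by apply/setP => y; rewrite H in_setT.
  by move=> eST; move: hk; rewrite -cS eST cardsT ltnn.
exists (x |: S); split; first by apply: subset_trans sAS (subsetUr _ _).
by rewrite cardsU1 xS cS.
Qed.

Theorem mainTheorem2 (d : nat) (ns : d.-tuple nat) (r : nat) :
  2 <= d -> 2 <= r -> r <= d ->
  (forall i j : 'I_d, i <= j -> tnth ns j <= tnth ns i) ->
  (forall i : 'I_d, 2 <= tnth ns i) ->
  LHC_exists ns r ->
  (Posz (\sum_(i < d) tnth ns i) - Posz (LHC_order ns r) <= Posz (d - 1))%R.
Proof.
move=> hd hr hrd _ h2 [L hL].
have pos : forall i, 0 < tnth ns i by move=> i; apply: leq_trans (h2 i).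
pose mkc (g : 'I_d -> nat) : cell ns :=
  finfun (fun i : 'I_d => Ordinal (ltn_pmod (g i) (pos i))).
pose Tt := option {i : 'I_d & 'I_(tnth ns i).-1}.
pose g (t : Tt) (j : 'I_d) : nat :=
  if t is Some (existT i k) then (if j == i then (val k).+1 else 0) else 0.
pose f (t : Tt) := mkc (g t).
have gl : forall t j, g t j < tnth ns j.
  move=> [[i k]|] j /=; last exact: pos.
  case: eqP => [->|_]; last exact: pos.
  by have := ltn_ord k; rewrite -ltnS prednK.
have fv : forall t j, val (f t j) = g t j.
  by move=> t j; rewrite /f /mkc ffunE /= modn_small.
pose supp (t : Tt) : {set 'I_d} := if t is Some (existT i _) then [set i] else set0.
have gs : forall t j, j \notin supp t -> g t j = 0.
  move=> [[i k]|] j //=; rewrite in_set1; by case: eqP.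
have cs : forall t, #|supp t| <= 1 by move=> [[i k]|] /=; rewrite ?cards1 ?cards0.
have finj : injective f.
  move=> t t' e.
  have e' : forall j, g t j = g t' j by move=> j; rewrite -!fv e.
  case: t t' e e' => [[i k]|] [[i' k']|] //= _ e'.
  - case: (eqVneq i i') => [ii'|ni].
      subst i'; have := e' i; rewrite eqxx => -[kk].
      by congr (Some (existT _ _ _)); apply: val_inj.
    by have := e' i; rewrite eqxx (negbTE ni).
  - by have := e' i; rewrite eqxx.
  - by have := e' i'; rewrite eqxx.
have Linj : injective (L \o f).
  move=> t t' /= e; apply: finj.
  have hA : #|supp t :|: supp t'| <= r <= #|'I_d|.
    apply/andP; split; last by rewrite card_ord.
    rewrite cardsU; apply: leq_trans (leq_subr _ _) _.
    by have := cs t; have := cs t'; lia.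
  have [S [sub cS]] := exists_superset _ _ _ hA.
  apply: (hL S cS) e; apply/forallP => j; apply/implyP => jS.
  have jn : forall A : {set 'I_d}, A \subset S -> j \notin A.
    by move=> A sA; apply/negP => /(subsetP sA); rewrite (negbTE jS).
  rewrite !fv !gs //; apply: jn; apply: subset_trans sub.
    exact: subsetUr.
  exact: subsetUl.
have := leq_card _ Linj.
rewrite card_option card_tagged card_ord.
have -> : sumn [seq #|'I_(tnth ns i).-1| | i <- enum 'I_d] = \sum_(i < d) (tnth ns i).-1.
  by rewrite sumnE big_map big_enum /=; apply: eq_bigr => i _; rewrite card_ord.
have -> : \sum_(i < d) tnth ns i = \sum_(i < d) (tnth ns i).-1 + d.
  rewrite -[X in _ + X]card_ord -sum1_card -big_split /=.
  by apply: eq_bigr => i _; rewrite addn1 prednK.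
move: (\sum_(i < d) (tnth ns i).-1) (LHC_order ns r) => a n h.
lia.
Qed.
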